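(* Let $U:\mathbb{R}^d\to[0,+\infty)$ be convex and $M$-Lipschitz with $M\ge0$. Then for any $\kappa>0$ and $z,z'\in\mathbb{R}^d$, $$\langle\mathrm{prox}^\kappa_U(z)-z,z\rangle\le-\kappa U(z)+\kappa^2M^2+\kappa\{U(z')+M\|z'\|\}.$$
   Context: $\mathrm{prox}^\kappa_U(x)=\arg\min_{\tilde x\in\mathbb{R}^d}\{U(\tilde x)+\|x-\tilde x\|^2/(2\kappa)\}$; $\|\cdot\|$ Euclidean. *)

(* Defs.v *)
From HB Require Import structures.
From mathcomp Require Import all_boot all_order all_algebra.
From mathcomp Require Import boolp classical_sets reals.
Set Implicit Arguments. Unset Strict Implicit. Unset Printing Implicit Defensive.
Import Order.TTheory GRing.Theory Num.Theory.
Local Open Scope ring_scope.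
Local Open Scope classical_set_scope.

Definition dotv (R : realType) (d : nat) (u v : 'rV[R]_d) : R :=
  \sum_(i < d) u 0 i * v 0 i.

Definition enorm (R : realType) (d : nat) (u : 'rV[R]_d) : R :=
  Num.sqrt (dotv u u).

Definition convex_fun (R : realType) (d : nat) (U : 'rV[R]_d -> R) : Prop :=
  forall (x y : 'rV[R]_d) (t : R), 0 <= t -> t <= 1 ->
    U (t *: x + (1 - t) *: y) <= t * U x + (1 - t) * U y.

Definition lipschitz_with (R : realType) (d : nat) (M : R)
  (U : 'rV[R]_d -> R) : Prop :=
  forall x y : 'rV[R]_d, `|U x - U y| <= M * enorm (x - y).

(* prox^kappa_U(x) = argmin_{x~} { U(x~) + ||x - x~||^2 / (2 kappa) },
   realized with the choice operator xget (the minimizer is unique and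
   exists for U convex, continuous and kappa > 0). *)
Definition prox (R : realType) (d : nat) (kappa : R) (U : 'rV[R]_d -> R)
  (x : 'rV[R]_d) : 'rV[R]_d :=
  xget 0 [set p | forall q : 'rV[R]_d,
     U p + enorm (x - p) ^+ 2 / (2 * kappa) <=
     U q + enorm (x - q) ^+ 2 / (2 * kappa)].

(* Main.v *)
Require Import Defs.
From HB Require Import structures.
From mathcomp Require Import all_boot all_order all_algebra.
From mathcomp Require Import boolp classical_sets reals.
From mathcomp Require Import ring lra.
Import Order.TTheory GRing.Theory Num.Theory.
Local Open Scope ring_scope.

Section Aux.
Context {R : realType} {d : nat}.
Implicit Types (u v w : 'rV[R]_d) (t : R).

Lemma dotvC u v : dotv u v = dotv v u.
Proof. by rewrite /dotv; apply: eq_bigr => i _; rewrite mulrC. Qed.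

Lemma dotvDl u v w : dotv (u + v) w = dotv u w + dotv v w.
Proof. by rewrite /dotv -big_split; apply: eq_bigr => i _; rewrite mxE mulrDl. Qed.

Lemma dotvZl t u v : dotv (t *: u) v = t * dotv u v.
Proof. by rewrite /dotv mulr_sumr; apply: eq_bigr => i _; rewrite mxE mulrA. Qed.

Lemma dotvNl u v : dotv (- u) v = - dotv u v.
Proof. by rewrite -scaleN1r dotvZl mulN1r. Qed.

Lemma dotvDr u v w : dotv w (u + v) = dotv w u + dotv w v.
Proof. by rewrite dotvC dotvDl !(dotvC w). Qed.

Lemma dotvZr t u v : dotv v (t *: u) = t * dotv v u.
Proof. by rewrite dotvC dotvZl dotvC. Qed.

Lemma dotvNr u v : dotv v (- u) = - dotv v u.
Proof. by rewrite dotvC dotvNl dotvC. Qed.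

Lemma dotv0r u : dotv u 0 = 0.
Proof. by rewrite /dotv big1 // => i _; rewrite mxE mulr0. Qed.

Lemma dotv_ge0 u : 0 <= dotv u u.
Proof. by rewrite /dotv sumr_ge0 // => i _; rewrite -expr2 sqr_ge0. Qed.

Lemma enorm_sq u : enorm u ^+ 2 = dotv u u.
Proof. by rewrite /enorm sqr_sqrtr // dotv_ge0. Qed.

Lemma enorm_ge0 u : 0 <= enorm u.
Proof. by rewrite /enorm sqrtr_ge0. Qed.

Lemma enormN u : enorm (- u) = enorm u.
Proof. by rewrite /enorm dotvNl dotvNr opprK. Qed.

Lemma dotv_exp u v t : dotv (u + t *: v) (u + t *: v) =
  dotv u u + 2 * t * dotv u v + t ^+ 2 * dotv v v.
Proof.
rewrite !dotvDl !dotvDr !dotvZl !dotvZr (dotvC v u) expr2; ring.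
Qed.

End Aux.

Theorem lemma10 (R : realType) (d : nat) (U : 'rV[R]_d -> R) (M : R)
  (U_ge0 : forall x, 0 <= U x) (U_cvx : convex_fun U)
  (M_ge0 : 0 <= M) (U_lip : lipschitz_with M U)
  (kappa : R) (kappa_gt0 : 0 < kappa) (z z' : 'rV[R]_d) :
  dotv (prox kappa U z - z) z <=
    - (kappa * U z) + kappa ^+ 2 * M ^+ 2 + kappa * (U z' + M * enorm z').
Proof.
set p := prox kappa U z.
set a := z - p.
have claim : - dotv a p <= kappa * (U 0 - U p).
  have [Hp|Hp0] : (forall q : 'rV[R]_d,
     U p + enorm (z - p) ^+ 2 / (2 * kappa) <=
     U q + enorm (z - q) ^+ 2 / (2 * kappa)) \/ p = 0.
    case: (pselect (exists m : 'rV[R]_d, forall q : 'rV[R]_d,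
     U m + enorm (z - m) ^+ 2 / (2 * kappa) <=
     U q + enorm (z - q) ^+ 2 / (2 * kappa))) => [ex|nex].
      by left; exact: (xgetPex 0 ex).
    right; rewrite /p /prox; apply: xgetPN => x Hx; apply: nex; by exists x.
  - set X := dotv a p; set P := dotv p p.
    have P0 : 0 <= P by exact: dotv_ge0.
    have ineq : forall t, 0 < t -> t <= 1 ->
        0 <= t * (2 * kappa * (U 0 - U p) + 2 * X + t * P).
      move=> t t0 t1.
      have H := Hp ((1 - t) *: p).
      have E : z - (1 - t) *: p = a + t *: p.
        rewrite /a scalerBl scale1r opprB.
        by rewrite addrCA addrC.
      rewrite E !enorm_sq in H.
      have Ex : dotv (a + t *: p) (a + t *: p) =
           dotv a a + 2 * t * X + t ^+ 2 * P.
        by rewrite dotv_exp.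
      rewrite Ex in H.
      have Hc := U_cvx 0 p t (ltW t0) t1.
      rewrite scaler0 add0r in Hc.
      have k0 : 0 < 2 * kappa by rewrite mulr_gt0.
      set A := dotv a a in H Ex.
      have : U p * (2 * kappa) + A <=
             U ((1 - t) *: p) * (2 * kappa) + (A + 2 * t * X + t ^+ 2 * P).
        set B := 2 * kappa in H k0 *; have := ler_wpM2r (ltW k0) H.
        by rewrite !mulrDl !divfK ?gt_eqF.
      have : U ((1 - t) *: p) * (2 * kappa) <=
             (t * U 0 + (1 - t) * U p) * (2 * kappa).
        by rewrite ler_wpM2r // ltW.
      move=> h1 h2.
      have -> : t * (2 * kappa * (U 0 - U p) + 2 * X + t * P) =
         (t * U 0 + (1 - t) * U p) * (2 * kappa) + (A + 2 * t * X + t ^+ 2 * P)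
         - (U p * (2 * kappa) + A) by rewrite expr2; ring.
      lra.
    rewrite -/X.
    have k0 : 0 < 2 * kappa by rewrite mulr_gt0.
    rewrite -subr_ge0.
    set c := kappa * (U 0 - U p) - - X.
    rewrite leNgt; apply/negP => cneg.
    set s := P - c.
    have s0 : 0 < s by rewrite /s; lra.
    set t := - c / s.
    have ts : t * s = - c by rewrite /t divfK ?gt_eqF.
    have t0 : 0 < t by rewrite /t divr_gt0 // oppr_gt0.
    have t1 : t <= 1 by rewrite /t ler_pdivrMr // mul1r /s; lra.
    have H := ineq t t0 t1.
    have H' : 0 <= 2 * kappa * (U 0 - U p) + 2 * X + t * P.
      by rewrite -(pmulr_rge0 _ t0).
    have e : 2 * kappa * (U 0 - U p) + 2 * X = 2 * c by rewrite /c; ring.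
    rewrite e in H'.
    have : t * P = - c + t * c.
      have -> : P = s + c by rewrite /s; ring.
      by rewrite mulrDr ts.
    move=> e2; rewrite e2 in H'.
    have : 0 <= c * (1 + t) by rewrite mulrDr mulr1 mulrC; lra.
    rewrite pmulr_lge0 ?ltNge ?(ltW cneg) //; last lra.
    by rewrite leNgt cneg.
  - rewrite Hp0 dotv0r subrr mulr0 oppr0 //.
have E1 : prox kappa U z - z = - a by rewrite /a opprB.
have E2 : z = a + p by rewrite /a subrK.
rewrite E1 dotvNl.
rewrite [X in dotv a X]E2 dotvDr -enorm_sq.
have L1 : U z - U p <= M * enorm a.
  by have := U_lip z p; rewrite -/a => /(le_trans (ler_norm _)).
have L2 : U 0 - U z' <= M * enorm z'.
  by have := U_lip 0 z'; rewrite sub0r enormN => /(le_trans (ler_norm _)).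
have n0 := enorm_ge0 a.
set n := enorm a in L1 n0 *.
have K1 : kappa * (U z - U p) <= kappa * (M * n) by rewrite ler_wpM2l // ltW.
have K2 : kappa * (U 0 - U z') <= kappa * (M * enorm z') by rewrite ler_wpM2l // ltW.
have Q : kappa * M * n - n ^+ 2 <= kappa ^+ 2 * M ^+ 2.
  have : 0 <= (n - kappa * M) ^+ 2 + kappa * M * n by rewrite addr_ge0 ?sqr_ge0 // !mulr_ge0 // ltW.
  rewrite !expr2 => h; nra.
rewrite -/n in claim *.
nra.
Qed.
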